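(* For every integer $n \geq 2$, there exists a Kainen drawing of $K_{4,n}$ in $S_{h(4,n)}$, where $h(4,n) = \lfloor (n-2)/2 \rfloor$.
   Context: $S_g$ is the closed orientable surface of genus $g$. A drawing of a graph in a surface is a locally injective map with vertices mapped to distinct points, no vertex in the interior of an edge, and finitely many crossings (identifications of interior points of two edges). A Kainen drawing of $K_{m,n}$ in $S_g$ is a drawing with exactly $mn - 2(m+n-2+2g)$ crossings (Kainen's lower bound on the crossing number of $K_{m,n}$ in $S_g$). *)

(* Defs.v *)
From HB Require Import structures.
From mathcomp Require Import all_boot all_order all_algebra.
From mathcomp Require Import all_classical all_reals all_analysis.
Set Implicit Arguments. Unset Strict Implicit. Unset Printing Implicit Defensive.
Import Order.TTheory GRing.Theory Num.Theory.
Import numFieldNormedType.Exports.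
Local Open Scope classical_set_scope.
Local Open Scope ring_scope.

Section KainenDefs.
Variable R : realType.

Definition pt2 := (R * R)%type.
Definition pt3 := (R * R * R)%type.

Definition eucl2 (p q : pt2) : R :=
  Num.sqrt ((p.1 - q.1) ^+ 2 + (p.2 - q.2) ^+ 2).

(* The closed orientable surface S_g is realised as the double of the planar
   domain D_g = (closed unit disk) minus g disjoint open disks of radius
   1/(2(g+2)) centred at (-1 + 2(i+1)/(g+2), 0), i < g.
   hfun g p >= 0 iff p in D_g, and hfun g p = 0 iff p lies on the boundary of
   D_g.  S_g = { (x,y,z) | (x,y) in D_g, z = +/- hfun g (x,y) }, i.e. two copies
   of D_g glued along their boundary (g+1 circles): a closed orientable surface
   of Euler characteristic 2(1-g) = 2 - 2g, i.e. of genus g. *)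
Definition hole_center (g : nat) (i : nat) : pt2 :=
  (-1 + 2 * (i.+1)%:R / (g.+2)%:R, 0).
Definition hole_radius (g : nat) : R := 1 / (2 * (g.+2)%:R).

Definition hfun (g : nat) (p : pt2) : R :=
  \big[Order.min/(1 - eucl2 p (0, 0))]_(i < g)
     (eucl2 p (hole_center g i) - hole_radius g).

Definition surface (g : nat) : set pt3 :=
  [set x | 0 <= hfun g (x.1.1, x.1.2) /\ x.2 ^+ 2 = hfun g (x.1.1, x.1.2) ^+ 2].

Record drawing (m n g : nat) := Drawing {
  vpos : 'I_m + 'I_n -> pt3;
  gam : 'I_m * 'I_n -> R -> pt3;
  vpos_in : forall v, surface g (vpos v);
  vpos_inj : injective vpos;
  gam_in : forall e t, 0 <= t <= 1 -> surface g (gam e t);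
  gam_cont : forall e, {within `[0, 1], continuous (gam e)};
  gam_start : forall e, gam e 0 = vpos (inl e.1);
  gam_end : forall e, gam e 1 = vpos (inr e.2);
  no_vertex_on_edge : forall v e t, 0 < t < 1 -> gam e t <> vpos v;
  loc_inj_edge : forall e t, 0 < t < 1 -> exists2 d : R, 0 < d &
      forall s s', 0 <= s <= 1 -> 0 <= s' <= 1 ->
        `|s - t| < d -> `|s' - t| < d -> gam e s = gam e s' -> s = s';
  loc_inj_left : forall i : 'I_m, exists2 d : R, 0 < d &
      forall (j j' : 'I_n) s s', 0 <= s < d -> 0 <= s' < d ->
        gam (i, j) s = gam (i, j') s' ->
        (j = j' /\ s = s') \/ (s = 0 /\ s' = 0);
  loc_inj_right : forall j : 'I_n, exists2 d : R, 0 < d &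
      forall (i i' : 'I_m) s s', 1 - d < s <= 1 -> 1 - d < s' <= 1 ->
        gam (i, j) s = gam (i', j) s' ->
        (i = i' /\ s = s') \/ (s = 1 /\ s' = 1)
}.

Definition epoint (m n : nat) := (('I_m * 'I_n) * R)%type.

Definition crossings m n g (D : drawing m n g) : set (set (epoint m n)) :=
  [set S | exists p q : epoint m n,
     [/\ p <> q, 0 < p.2 < 1, 0 < q.2 < 1,
         gam D p.1 p.2 = gam D q.1 q.2 & S = [set p; q]]].

Definition kainen_bound (m n g : nat) : int :=
  (m * n)%:Z - 2 * ((m + n)%:Z - 2 + 2 * g%:Z).

Definition kainen_drawing m n g (D : drawing m n g) : Prop :=
  exists k : nat, (crossings D #= `I_k)%card /\ k%:Z = kainen_bound m n g.

End KainenDefs.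

(* Main.v *)
Require Import Defs.
From HB Require Import structures.
From mathcomp Require Import all_boot all_order all_algebra.
From mathcomp Require Import all_classical all_reals all_analysis.
From mathcomp Require Import ring lra zify.
Import Order.TTheory GRing.Theory Num.Theory.
Import numFieldNormedType.Exports.

Section K.
Local Open Scope classical_set_scope.
Local Open Scope ring_scope.
Variable R : realType.
Variable g : nat.
Implicit Types (x y t u : R).

Definition ss : R := 2 / (g.+2)%:R.
Definition hh : R := ss / 2.
Definition Y0 : R := 3 / 4.
Definition qq : R := 1 - ss / 4.
Definition NN : nat := (g.*2).+2.
Definition ck (k : nat) : R := -1 + (k.+1)%:R * ss.

Definition xw (j : nat) : R :=
  if j == 0%N then -1 else if j == (g.*2).+1 then 1 else -1 + (j%:R / 2 + 1/4) * ss.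
Definition xc (j : nat) : R :=
  if j == 0%N then -1 + ss / 2 else if j == (g.*2).+1 then 1 - ss / 2 else xw j.

Definition m1 t : R := Order.min (2 * t) 1.
Definition m2 t : R := Order.max (2 * t - 1) 0.
Definition n2 t : R := Order.min (Order.max (4 * t - 2) 0) 1.
Definition n3 t : R := Order.max (4 * t - 3) 0.

Definition Yr t : R := Y0 - (Y0 - hh) * m1 t - hh * m2 t.
Definition Xr j t : R := xc j * m1 t + (xw j - xc j) * m2 t.

Definition sg (i : 'I_4) : R := if odd i then -1 else 1.
Definition tau (i : 'I_4) : R := if (i < 2)%N then 1 else -1.

Definition path (i : 'I_4) (j : nat) t : R * R :=
  if (j < NN)%N then (Xr j t, sg i * Yr t)
  else if ~~ odd i then (0, Y0 + t * (1 - Y0))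
  else (qq * (m1 t - n3 t), - Y0 + Y0 * m1 t + hh * n2 t + (1 - hh) * n3 t).

Definition hf (p : R * R) : R := @hfun R g p.

Definition gamf (i : 'I_4) (j : nat) t : pt3 R :=
  ((path i j t).1, (path i j t).2, tau i * hf (path i j t)).

Definition vpa (i : 'I_4) : pt3 R := ((0, sg i * Y0), tau i * hf (0, sg i * Y0)).
Definition vpb (j : nat) : pt3 R := if (j < NN)%N then ((xw j, 0), 0) else ((0, 1), 0).

Lemma ss_gt0 : 0 < ss.
Proof. by rewrite /ss divr_gt0 // ltr0n. Qed.
Lemma ss_le1 : ss <= 1.
Proof. by rewrite /ss ler_pdivrMr ?ltr0n // mul1r ler_nat. Qed.
Lemma ssG : ss * (g%:R + 2) = 2.
Proof.
rewrite /ss -[(g.+2)%:R]natr1 -[(g.+1)%:R]natr1 -addrA -[1+1]/(2:R).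
by rewrite mulfVK // -[_ + 2]natrD pnatr_eq0 addn2.
Qed.
Lemma hc_eq (k : nat) : hole_center R g k = (ck k, 0).
Proof. rewrite /hole_center /ck /ss; congr (_, _); rewrite mulrA [2 * _]mulrC; by []. Qed.
Lemma hr_eq : hole_radius R g = ss / 4.
Proof.
rewrite /hole_radius /ss; have H : (g.+2)%:R != 0 :> R by rewrite pnatr_eq0.
field; apply/negP => /eqP E; have := ler0n R g; lra.
Qed.
Lemma ss4_ge0 : 0 <= ss / 4.
Proof. by rewrite divr_ge0 // ltW // ss_gt0. Qed.

Lemma hf_gt0 x y : x^+2 + y^+2 < 1 ->
  (forall k, (k < g)%N -> (ss/4)^+2 < (x - ck k)^+2 + y^+2) -> 0 < hf (x,y).
Proof.
move=> H1 H2; rewrite /hf /hfun; apply: (big_ind (fun v => 0 < v)).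
- rewrite subr_gt0 /eucl2 /= !subr0 -sqrtr1 ltr_sqrt //; lra.
- by move=> a b a0 b0; rewrite lt_min a0 b0.
- move=> i _; rewrite hc_eq hr_eq subr_gt0 /eucl2 /= subr0.
  rewrite -[ss/4]ger0_norm ?ss4_ge0 // -sqrtr_sqr ltr_sqrt; first exact: H2.
  by apply: le_lt_trans (H2 i (ltn_ord i)); exact: sqr_ge0.
Qed.

Lemma hf_ge0 x y : x^+2 + y^+2 <= 1 ->
  (forall k, (k < g)%N -> (ss/4)^+2 <= (x - ck k)^+2 + y^+2) -> 0 <= hf (x,y).
Proof.
move=> H1 H2; rewrite /hf /hfun; apply: le_bigmin.
- rewrite subr_ge0 /eucl2 /= !subr0 -sqrtr1 ler_sqrt //; lra.
- move=> i _; rewrite hc_eq hr_eq subr_ge0 /eucl2 /= subr0.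
  rewrite -[ss/4]ger0_norm ?ss4_ge0 // -sqrtr_sqr ler_sqrt; first exact: H2.
  by rewrite addr_ge0 ?sqr_ge0.
Qed.

Lemma hf_eq0 x y : x^+2 + y^+2 <= 1 ->
  (forall k, (k < g)%N -> (ss/4)^+2 <= (x - ck k)^+2 + y^+2) ->
  (x^+2 + y^+2 = 1 \/ exists2 k, (k < g)%N & (x - ck k)^+2 + y^+2 = (ss/4)^+2) ->
  hf (x,y) = 0.
Proof.
move=> H1 H2 H3; apply/eqP; rewrite eq_le hf_ge0 // andbT.
case: H3 => [E|[k kg E]].
- apply: le_trans (bigmin_le_id _ _ _ _) _.
  by rewrite /eucl2 /= !subr0 E sqrtr1 subrr.
- apply: le_trans (bigmin_le _ (Ordinal kg) _) _.
  rewrite hc_eq hr_eq /eucl2 /= subr0 E sqrtr_sqr ger0_norm ?ss4_ge0 // subrr //.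
Qed.
Lemma xw_mid j : (0 < j)%N -> (j <= g.*2)%N ->
  xw j = -1 + (j%:R / 2 + 1/4) * ss /\ xc j = xw j.
Proof.
move=> j0 jg; rewrite /xc /xw.
have -> : (j == 0%N) = false by case: j j0 {jg}.
have -> : (j == (g.*2).+1) = false by apply/negbTE; rewrite neq_ltn ltnS jg.
by [].
Qed.

Lemma natR_le (a b : nat) : (a <= b)%N -> (a%:R : R) <= b%:R.
Proof. by rewrite ler_nat. Qed.
Lemma natR_lt (a b : nat) : (a < b)%N -> (a%:R : R) + 1 <= b%:R.
Proof. by move=> H; rewrite natr1 ler_nat. Qed.
Lemma dbl_R (a : nat) : ((a.*2)%:R : R) = 2 * a%:R.
Proof. by rewrite -mul2n natrM. Qed.

Lemma xw_last : xw (g.*2).+1 = 1 /\ xc (g.*2).+1 = 1 - ss / 2.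
Proof. by rewrite /xw /xc eqxx. Qed.
Lemma xw_0 : xw 0 = -1 /\ xc 0 = -1 + ss / 2.
Proof. by rewrite /xw /xc eqxx. Qed.

Lemma ss_facts : 0 < ss /\ ss <= 1 /\ ss * g%:R = 2 - 2 * ss.
Proof. split; first exact: ss_gt0. split; first exact: ss_le1. have := ssG. lra. Qed.
Arguments natR_le [a b]. Arguments natR_lt [a b].
Lemma jcases j : (j < NN)%N ->
  [\/ j = 0%N, j = (g.*2).+1 | (0 < j)%N /\ (j <= g.*2)%N].
Proof.
rewrite /NN ltnS leq_eqVlt => /orP[/eqP->|]; first by constructor 2.
rewrite ltnS; case: j => [|j] H; first by constructor 1.
by constructor 3.
Qed.

Arguments jcases [j].
Arguments xw_mid [j].
Lemma mid_bound j : (j <= g.*2)%N -> j%:R * ss <= 4 - 4 * ss.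
Proof.
move=> H; have [s0 [s1 sG]] := ss_facts.
have := ler_wpM2r (ltW s0) (natR_le H); rewrite dbl_R; lra.
Qed.

Arguments mid_bound [j].
Lemma xw_mono j j' : (j < j')%N -> (j' < NN)%N -> xw j < xw j' /\ xc j < xc j'.
Proof.
move=> jj' j'N; have jN : (j < NN)%N by apply: ltn_trans j'N.
have [s0 [s1 sG]] := ss_facts.
case: (jcases jN) => [E|E|[j0 jg]]; case: (jcases j'N) => [E'|E'|[j'0 j'g]];
  try subst j; try subst j'; try (exfalso; move: jj' j'N; rewrite /NN; lia).
- by rewrite (proj1 xw_0) (proj2 xw_0) (proj1 xw_last) (proj2 xw_last); split; lra.
- rewrite (proj1 xw_0) (proj2 xw_0) (proj2 (xw_mid j'0 j'g)) (proj1 (xw_mid j'0 j'g)).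
  have := ler_wpM2r (ltW s0) (natR_le j'0); rewrite mul1r; split; lra.
- rewrite (proj2 (xw_mid j0 jg)) (proj1 (xw_mid j0 jg)) (proj1 xw_last) (proj2 xw_last).
  have := mid_bound jg; split; lra.
- rewrite (proj2 (xw_mid j0 jg)) (proj1 (xw_mid j0 jg)).
  rewrite (proj2 (xw_mid j'0 j'g)) (proj1 (xw_mid j'0 j'g)).
  have := ler_wpM2r (ltW s0) (natR_lt jj'); split; lra.
Qed.
Lemma m_lo t : t <= 1/2 -> m1 t = 2 * t /\ m2 t = 0.
Proof. move=> H; rewrite /m1 /m2 min_l ?max_r //; lra. Qed.
Lemma m_hi t : 1/2 <= t -> m1 t = 1 /\ m2 t = 2 * t - 1.
Proof. move=> H; rewrite /m1 /m2 min_r ?max_l //; lra. Qed.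
Lemma n_lo t : t <= 1/2 -> n2 t = 0 /\ n3 t = 0.
Proof. move=> H; rewrite /n2 /n3 (@max_r _ _ (4 * t - 2)) ?min_l ?max_r //; lra. Qed.
Lemma n_mid t : 1/2 <= t -> t <= 3/4 -> n2 t = 4 * t - 2 /\ n3 t = 0.
Proof. move=> H H2; rewrite /n2 /n3 (@max_l _ _ (4 * t - 2)) ?min_l ?max_r //; lra. Qed.
Lemma n_hi t : 3/4 <= t -> n2 t = 1 /\ n3 t = 4 * t - 3.
Proof. move=> H; rewrite /n2 /n3 (@max_l _ _ (4 * t - 2)) ?min_r ?max_l //; lra. Qed.
Lemma nat_sq_ge1 (a b : nat) : a <> b -> 1 <= ((a%:R : R) - b%:R)^+2.
Proof.
move=> ab; case: (ltngtP a b) => H; last by [].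
- have := natR_lt H; nra.
- have := natR_lt H; nra.
Qed.
Lemma odd_sq (j k : nat) : 1 <= (2 * j%:R - (4 * k%:R + 3))^+2 :> R.
Proof.
have H : (j.*2 <> k.*2.*2 + 3)%N.
  move=> H; have := congr1 odd H; rewrite oddD !odd_double //.
have -> : (2 * j%:R - (4 * k%:R + 3)) = ((j.*2)%:R - (k.*2.*2 + 3)%:R :> R).
  rewrite natrD !dbl_R; ring.
exact: nat_sq_ge1.
Qed.

Lemma mid_hole j k : (0 < j)%N -> (j <= g.*2)%N ->
  (ss/4)^+2 <= (xw j - ck k)^+2 /\
  ((k = (j.-1)./2)%N -> (xw j - ck k)^+2 = (ss/4)^+2).
Proof.
move=> j0 jg; rewrite (proj1 (xw_mid j0 jg)) /ck.
have E : -1 + (j%:R / 2 + 1 / 4) * ss - (-1 + (k.+1)%:R * ss) =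
   ss / 4 * (2 * j%:R - (4 * k%:R + 3)).
  by rewrite -natr1; field.
rewrite E; split.
- by have := ler_wpM2l (sqr_ge0 (ss/4)) (odd_sq j k); rewrite mulr1 -exprMn.
- move=> ->; rewrite exprMn -[RHS]mulr1; congr (_ * _).
  have Hd := odd_double_half j.-1; set m := (j.-1)./2 in Hd *.
  have [Ej|Ej] : (j = m.*2.+1 \/ j = m.*2.+2)%N.
    by move: Hd; case: (odd j.-1) => /= Hd; [right|left]; lia.
  + rewrite Ej -[(m.*2.+1)%:R]natr1 dbl_R; ring.
  + rewrite Ej -[(m.*2.+2)%:R]natr1 -[(m.*2.+1)%:R]natr1 dbl_R; ring.
Qed.
Lemma xc_bnd j : (j < NN)%N -> -1 + ss/2 <= xc j <= 1 - ss/2.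
Proof.
move=> jN; have [s0 [s1 sG]] := ss_facts.
case: (jcases jN) => [->|->|[j0 jg]].
- rewrite (proj2 xw_0); lra.
- rewrite (proj2 xw_last); lra.
- rewrite (proj2 (xw_mid j0 jg)) (proj1 (xw_mid j0 jg)).
  have := mid_bound jg; have := ler_wpM2r (ltW s0) (natR_le j0); rewrite mul1r; lra.
Qed.

Lemma ck_bnd k : (k < g)%N -> -1 + ss <= ck k <= 1 - 2 * ss.
Proof.
move=> kg; have [s0 [s1 sG]] := ss_facts; rewrite /ck.
have := ler_wpM2r (ltW s0) (natR_le kg).
have : 0 <= k%:R * ss by rewrite mulr_ge0 // ltW.
rewrite -[(k.+1)%:R]natr1; lra.
Qed.
Arguments m_lo [t]. Arguments m_hi [t]. Arguments n_lo [t]. Arguments n_mid [t]. Arguments n_hi [t].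
Arguments xc_bnd [j]. Arguments ck_bnd [k]. Arguments mid_hole [j] k.
Lemma reg_in j t : (j < NN)%N -> 0 < t < 1 ->
  [/\ 0 < Yr t < Y0, (Xr j t)^+2 + (Yr t)^+2 < 1 &
  forall k, (k < g)%N -> (ss/4)^+2 < (Xr j t - ck k)^+2 + (Yr t)^+2].
Proof.
move=> jN /andP[t0 t1]; have [s0 [s1 sG]] := ss_facts.
have xb := xc_bnd jN.
rewrite /Yr /Xr /hh /Y0.
case: (lerP t (1/2)) => ht.
- rewrite (proj1 (m_lo ht)) (proj2 (m_lo ht)) !mulr0 !addr0 subr0.
  have Hy : ss/2 <= 3/4 - (3/4 - ss/2) * (2 * t) by nra.
  split.
  + apply/andP; split; nra.
  + have hx : (xc j)^+2 <= (1 - ss/2)^+2 by nra.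
    set v := 2 * t.
    have v0 : 0 < v by rewrite /v; lra.
    have v1 : v <= 1 by rewrite /v; lra.
    have P : 0 <= v * (1 - v) * ((xc j)^+2 + (3/4 - ss/2)^+2).
      apply: mulr_ge0; last by rewrite addr_ge0 ?sqr_ge0.
      apply: mulr_ge0; lra.
    have Q : v * ((xc j)^+2 + (ss/2)^+2) < v * 1.
      by rewrite ltr_pM2l //; nra.
    have E : (xc j * v) ^+ 2 + (3 / 4 - (3 / 4 - ss / 2) * v) ^+ 2 =
      (1 - v) * (9/16) + v * ((xc j)^+2 + (ss/2)^+2) -
      v * (1 - v) * ((xc j)^+2 + (3/4 - ss/2)^+2) by rewrite /v; field.
    rewrite E; nra.
  + move=> k kg.
    have HY : (ss/4)^+2 < (3 / 4 - (3 / 4 - ss / 2) * (2 * t))^+2 by nra.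
    have := sqr_ge0 (xc j * (2 * t) - ck k); lra.
- rewrite (proj1 (m_hi (ltW ht))) (proj2 (m_hi (ltW ht))) mulr1.
  case: (jcases jN) => [E|E|[j0 jg]]; try subst j.
  + rewrite (proj1 xw_0) (proj2 xw_0).
    set a := ss/2 * (2 - 2*t).
    have EX : (-1 + ss/2) * 1 + (-1 - (-1 + ss/2)) * (2*t - 1) = -1 + a by rewrite /a; field.
    have EY : 3/4 - (3/4 - ss/2) - ss/2 * (2*t-1) = a by rewrite /a; field.
    have a0 : 0 < a by rewrite /a; nra.
    have a1 : a <= ss/2 by rewrite /a; nra.
    rewrite EX EY; split.
    * apply/andP; split; lra.
    * nra.
    * move=> k kg; have := ck_bnd kg => /andP[c1 c2].
      have H : -1 + a - ck k <= - (ss/2) by lra.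
      nra.
  + rewrite (proj1 xw_last) (proj2 xw_last).
    set a := ss/2 * (2 - 2*t).
    have EX : (1 - ss/2) * 1 + (1 - (1 - ss/2)) * (2*t - 1) = 1 - a by rewrite /a; field.
    have EY : 3/4 - (3/4 - ss/2) - ss/2 * (2*t-1) = a by rewrite /a; field.
    have a0 : 0 < a by rewrite /a; nra.
    have a1 : a <= ss/2 by rewrite /a; nra.
    rewrite EX EY; split.
    * apply/andP; split; lra.
    * nra.
    * move=> k kg; have := ck_bnd kg => /andP[c1 c2].
      have H : ss/2 <= 1 - a - ck k by lra.
      nra.
  + rewrite (proj2 (xw_mid j0 jg)) subrr mul0r addr0 mulr1.
    set a := ss/2 * (2 - 2*t).
    have EY : 3/4 - (3/4 - ss/2) - ss/2 * (2*t-1) = a by rewrite /a; field.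
    have a0 : 0 < a by rewrite /a; nra.
    have a1 : a <= ss/2 by rewrite /a; nra.
    rewrite EY; split.
    * apply/andP; split; lra.
    * have : -1 + 3 * ss / 4 <= xw j <= 1 - 7 * ss / 4.
        rewrite (proj1 (xw_mid j0 jg)).
        have := mid_bound jg; have := ler_wpM2r (ltW s0) (natR_le j0); rewrite mul1r; lra.
      move=> /andP[x1 x2].
      have hx : (xw j)^+2 <= (1 - 3 * ss / 4)^+2 by nra.
      have ha : a^+2 <= (ss/2)^+2 by nra.
      nra.
    * move=> k kg; have [Hk _] := mid_hole k j0 jg.
      have : 0 < a^+2 by rewrite exprn_gt0.
      lra.
Qed.
Arguments xw_mono [j j'].
Lemma Yr_lt t t' : t < t' -> Yr t' < Yr t.
Proof.
move=> tt'; have [s0 [s1 sG]] := ss_facts; rewrite /Yr /hh /Y0.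
case: (lerP t (1/2)) => ht; case: (lerP t' (1/2)) => ht'.
- rewrite (proj1 (m_lo ht)) (proj2 (m_lo ht)) (proj1 (m_lo ht')) (proj2 (m_lo ht')); nra.
- rewrite (proj1 (m_lo ht)) (proj2 (m_lo ht)) (proj1 (m_hi (ltW ht'))) (proj2 (m_hi (ltW ht'))); nra.
- lra.
- rewrite (proj1 (m_hi (ltW ht))) (proj2 (m_hi (ltW ht))) (proj1 (m_hi (ltW ht'))) (proj2 (m_hi (ltW ht'))); nra.
Qed.

Arguments Yr_lt [t t'].
Lemma Yr_inj t t' : Yr t = Yr t' -> t = t'.
Proof.
move=> E; case: (ltrgtP t t') => // H.
- by have := Yr_lt H; rewrite E ltxx.
- by have := Yr_lt H; rewrite E ltxx.
Qed.

Lemma xc_le_xw_last j : (j < NN)%N -> xc j <= 1 - ss/2 /\ xw j <= 1.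
Proof.
move=> jN; have [s0 [s1 sG]] := ss_facts.
case: (jcases jN) => [->|->|[j0 jg]].
- rewrite (proj1 xw_0) (proj2 xw_0); split; lra.
- rewrite (proj1 xw_last) (proj2 xw_last); split; lra.
- rewrite (proj2 (xw_mid j0 jg)) (proj1 (xw_mid j0 jg)).
  have := mid_bound jg; split; lra.
Qed.

Lemma notlast_bnd j : (j < NN)%N -> j <> (g.*2).+1 -> xc j <= 1 - 3 * ss / 2 /\ xw j <= 1 - 3 * ss/2.
Proof.
move=> jN jl; have [s0 [s1 sG]] := ss_facts.
case: (jcases jN) => [->|//|[j0 jg]].
- rewrite (proj1 xw_0) (proj2 xw_0); split; lra.
- rewrite (proj2 (xw_mid j0 jg)) (proj1 (xw_mid j0 jg)).
  have := mid_bound jg; split; lra.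
Qed.

Lemma Xr_mono j j' t : (j < j')%N -> (j' < NN)%N -> 0 < t < 1 -> Xr j t < Xr j' t.
Proof.
move=> jj' j'N /andP[t0 t1]; have [H1 H2] := xw_mono jj' j'N; rewrite /Xr.
case: (lerP t (1/2)) => ht.
- rewrite (proj1 (m_lo ht)) (proj2 (m_lo ht)); nra.
- rewrite (proj1 (m_hi (ltW ht))) (proj2 (m_hi (ltW ht))); nra.
Qed.

Arguments Xr_mono [j j' t].
Lemma Xr_inj j j' t : (j < NN)%N -> (j' < NN)%N -> 0 < t < 1 -> Xr j t = Xr j' t -> j = j'.
Proof.
move=> jN j'N ht E; case: (ltngtP j j') => // H.
- by have := Xr_mono H j'N ht; rewrite E ltxx.
- by have := Xr_mono H jN ht; rewrite E ltxx.
Qed.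
Arguments notlast_bnd [j]. Arguments xc_le_xw_last [j]. Arguments Xr_inj [j j' t]. Arguments Yr_inj [t t'].
Definition Sx t := qq * (m1 t - n3 t).
Definition Sy t := - Y0 + Y0 * m1 t + hh * n2 t + (1 - hh) * n3 t.

Lemma S_in t : 0 < t < 1 ->
  [/\ 0 < Sx t, -Y0 < Sy t < 1, (Sx t)^+2 + (Sy t)^+2 < 1 &
  forall k, (k < g)%N -> (ss/4)^+2 < (Sx t - ck k)^+2 + (Sy t)^+2].
Proof.
move=> /andP[t0 t1]; have [s0 [s1 sG]] := ss_facts.
rewrite /Sx /Sy /qq /hh /Y0.
case: (lerP t (1/2)) => ht.
- rewrite (proj1 (m_lo ht)) (proj1 (n_lo ht)) (proj2 (n_lo ht)) !mulr0 !addr0 subr0.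
  set v := 2 * t.
  have v0 : 0 < v by rewrite /v; lra.
  have v1 : v <= 1 by rewrite /v; lra.
  split.
  + nra.
  + apply/andP; split; nra.
  + have P : 0 <= v * (1 - v) * ((1 - ss/4)^+2 + (3/4)^+2).
      apply: mulr_ge0; last by rewrite addr_ge0 ?sqr_ge0.
      apply: mulr_ge0; lra.
    have E : ((1 - ss / 4) * v) ^+ 2 + (- (3 / 4) + 3 / 4 * v) ^+ 2 =
      (1 - v) * (9/16) + v * (1 - ss/4)^+2 - v * (1 - v) * ((1 - ss/4)^+2 + (3/4)^+2).
      by rewrite /v; field.
    rewrite E; nra.
  + move=> k kg; have := ck_bnd kg => /andP[c1 c2].
    case: (lerP (ss/2) (3/4 - 3/4 * v)) => hv.
    * have : (ss/4)^+2 < (- (3 / 4) + 3 / 4 * v)^+2 by nra.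
      have := sqr_ge0 ((1 - ss / 4) * v - ck k); lra.
    * have : ss/2 <= (1 - ss / 4) * v - ck k by nra.
      have := sqr_ge0 (- (3 / 4) + 3 / 4 * v); nra.
- rewrite (proj1 (m_hi (ltW ht))).
  case: (lerP t (3/4)) => ht2.
  + rewrite (proj1 (n_mid (ltW ht) ht2)) (proj2 (n_mid (ltW ht) ht2)) !mulr0 !subr0 !addr0 !mulr1.
    have EY : - (3 / 4) + 3 / 4 = 0 :> R by lra.
    rewrite EY add0r.
    have y0 : 0 < ss / 2 * (4 * t - 2) <= ss/2 by apply/andP; split; nra.
    split.
    * nra.
    * apply/andP; split; nra.
    * nra.
    * move=> k kg; have := ck_bnd kg => /andP[c1 c2].
      have : ss/2 <= (1 - ss/4) - ck k by lra.
      have := sqr_ge0 (ss / 2 * (4 * t - 2)); nra.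
  + rewrite (proj1 (n_hi (ltW ht2))) (proj2 (n_hi (ltW ht2))) !mulr1.
    set w := 4 * t - 3.
    have w0 : 0 < w by rewrite /w; lra.
    have w1 : w < 1 by rewrite /w; lra.
    have EY : - (3 / 4) + 3 / 4 + ss / 2 + (1 - ss / 2) * w = ss/2 + (1 - ss/2) * w by lra.
    rewrite EY.
    split.
    * nra.
    * apply/andP; split; nra.
    * have P : 0 <= w * (1 - w) * ((1 - ss/4)^+2 + (1 - ss/2)^+2).
        apply: mulr_ge0; last by rewrite addr_ge0 ?sqr_ge0.
        apply: mulr_ge0; lra.
      have E : ((1 - ss / 4) * (1 - w)) ^+ 2 + (ss / 2 + (1 - ss / 2) * w) ^+ 2 =
        (1 - w) * ((1 - ss/4)^+2 + (ss/2)^+2) + w - w * (1 - w) * ((1 - ss/4)^+2 + (1 - ss/2)^+2).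
        by rewrite /w; field.
      rewrite E.
      have : (1 - ss/4)^+2 + (ss/2)^+2 < 1 by nra.
      nra.
    * move=> k kg.
      have y1 : ss/2 <= ss / 2 + (1 - ss / 2) * w.
        rewrite lerDl; apply: mulr_ge0; lra.
      have : (ss/4)^+2 < (ss / 2 + (1 - ss / 2) * w)^+2.
        set y := ss / 2 + (1 - ss / 2) * w in y1 *; nra.
      have := sqr_ge0 ((1 - ss / 4) * (1 - w) - ck k); lra.
Qed.
Lemma Sy_lo t : t <= 1/2 -> Sy t = - Y0 + Y0 * (2 * t) /\ Sx t = qq * (2 * t).
Proof. move=> h; rewrite /Sy /Sx (proj1 (m_lo h)) (proj1 (n_lo h)) (proj2 (n_lo h)); split; ring. Qed.
Lemma Sy_mid t : 1/2 <= t -> t <= 3/4 -> Sy t = hh * (4 * t - 2) /\ Sx t = qq.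
Proof.
move=> h h'; rewrite /Sy /Sx (proj1 (m_hi h)) (proj1 (n_mid h h')) (proj2 (n_mid h h')).
split; ring.
Qed.
Lemma Sy_hi t : 3/4 <= t -> Sy t = hh + (1 - hh) * (4 * t - 3) /\ Sx t = qq * (1 - (4 * t - 3)).
Proof.
move=> h; have h1 : 1/2 <= t by lra.
rewrite /Sy /Sx (proj1 (m_hi h1)) (proj1 (n_hi h)) (proj2 (n_hi h)); split; ring.
Qed.

Arguments Sy_lo [t]. Arguments Sy_mid [t]. Arguments Sy_hi [t].
Lemma S_lt t t' : 0 <= t -> t < t' -> t' <= 1 -> Sy t < Sy t'.
Proof.
move=> t0 tt' t1; have [s0 [s1 sG]] := ss_facts.
have hh0 : 0 < hh by rewrite /hh; lra.
have hh1 : hh < 1 by rewrite /hh; lra.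
have Y00 : 0 < Y0 by rewrite /Y0; lra.
case: (lerP t (1/2)) => a; case: (lerP t' (1/2)) => a'; try lra;
  case: (lerP t (3/4)) => b; case: (lerP t' (3/4)) => b'; try lra.
- rewrite (proj1 (Sy_lo a)) (proj1 (Sy_lo a')); nra.
- rewrite (proj1 (Sy_lo a)) (proj1 (Sy_mid (ltW a') b')); rewrite /Y0; nra.
- rewrite (proj1 (Sy_lo a)) (proj1 (Sy_hi (ltW b'))); rewrite /Y0; nra.
- rewrite (proj1 (Sy_mid (ltW a) b)) (proj1 (Sy_mid (ltW a') b')); nra.
- rewrite (proj1 (Sy_mid (ltW a) b)) (proj1 (Sy_hi (ltW b'))); nra.
- rewrite (proj1 (Sy_hi (ltW b))) (proj1 (Sy_hi (ltW b'))); nra.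
Qed.

Arguments S_lt [t t'].
Lemma Sy_inj t t' : 0 <= t <= 1 -> 0 <= t' <= 1 -> Sy t = Sy t' -> t = t'.
Proof.
move=> /andP[a b] /andP[c d] E; case: (ltrgtP t t') => // H.
- by have := S_lt a H d; rewrite E ltxx.
- by have := S_lt c H b; rewrite E ltxx.
Qed.

Lemma Sy_zero t : 0 < t < 1 -> Sy t = 0 -> t = 1/2.
Proof.
move=> /andP[a b] E; apply: Sy_inj; rewrite ?E; try (apply/andP; lra).
by rewrite (proj1 (Sy_mid (lexx _) _)) /hh; [field | lra].
Qed.
Arguments reg_in [j t]. Arguments S_in [t]. Arguments Sy_zero [t].
Definition Lam (x y : R) := (1 - ss/2) * (y - Y0) + x * (Y0 - hh).

Lemma reg_Lam j t : (j < NN)%N -> 0 < t < 1 -> Lam (Xr j t) (Yr t) <= 0.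
Proof.
move=> jN /andP[t0 t1]; have [s0 [s1 sG]] := ss_facts.
have [c1 w1] := xc_le_xw_last jN.
rewrite /Lam /Xr /Yr /hh /Y0.
case: (lerP t (1/2)) => ht.
- rewrite (proj1 (m_lo ht)) (proj2 (m_lo ht)).
  have E : (1 - ss / 2) * (3 / 4 - (3 / 4 - ss / 2) * (2 * t) - ss / 2 * 0 - 3 / 4) +
    (xc j * (2 * t) + (xw j - xc j) * 0) * (3 / 4 - ss / 2) =
    (2 * t) * (3/4 - ss/2) * (xc j - (1 - ss/2)) by ring.
  rewrite E; apply: mulr_ge0_le0; [apply: mulr_ge0|]; lra.
- rewrite (proj1 (m_hi (ltW ht))) (proj2 (m_hi (ltW ht))).
  set w := 2 * t - 1.
  have w0 : 0 < w by rewrite /w; lra.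
  have w1' : w < 1 by rewrite /w; lra.
  have X1 : xc j * 1 + (xw j - xc j) * w <= 1 - ss/2 + ss/2 * w by nra.
  have : (xc j * 1 + (xw j - xc j) * w) * (3/4 - ss/2) <= (1 - ss/2 + ss/2 * w) * (3/4 - ss/2).
    by apply: ler_wpM2r => //; lra.
  nra.
Qed.

Lemma S_Lam t : 3/4 < t < 1 -> 0 < Lam (Sx t) (Sy t).
Proof.
move=> /andP[a b]; have [s0 [s1 sG]] := ss_facts.
rewrite (proj1 (Sy_hi (ltW a))) (proj2 (Sy_hi (ltW a))) /Lam /qq /hh /Y0.
set w := 4 * t - 3.
have w0 : 0 < w by rewrite /w; lra.
have w1 : w < 1 by rewrite /w; lra.
nra.
Qed.

Arguments reg_Lam [j t]. Arguments S_Lam [t].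
Lemma G2 j t t' : (j < NN)%N -> 0 < t < 1 -> 0 < t' < 1 ->
  Xr j t = Sx t' -> Yr t = Sy t' -> [/\ j = (g.*2).+1, t = 3/4 & t' = 5/8].
Proof.
move=> jN ht ht' EX EY; have [s0 [s1 sG]] := ss_facts.
have [/andP[y0 y1] _ _] := reg_in jN ht.
move: (ht) (ht') => /andP[t0 t1] /andP[t'0 t'1].
case: (lerP t' (1/2)) => a.
  by move: EY; rewrite (proj1 (Sy_lo a)) /Y0 => EY; exfalso; nra.
case: (lerP t' (3/4)) => b; last first.
  have := reg_Lam jN ht; rewrite EX EY => H.
  have H' : 3/4 < t' < 1 by apply/andP.
  by have := S_Lam H'; lra.
move: EX EY; rewrite (proj1 (Sy_mid (ltW a) b)) (proj2 (Sy_mid (ltW a) b)).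
have [c1 w1] := xc_le_xw_last jN.
rewrite /Xr /Yr /qq /hh /Y0.
case: (lerP t (1/2)) => c.
  by rewrite (proj1 (m_lo c)) (proj2 (m_lo c)) => EX EY; exfalso; nra.
rewrite (proj1 (m_hi (ltW c))) (proj2 (m_hi (ltW c))) => EX EY.
have [Ej|Ej] := eqVneq j (g.*2).+1.
- subst j; move: EX EY; rewrite (proj1 xw_last) (proj2 xw_last) => EX EY.
  have Et : t = 3/4 by nra.
  split => //; subst t; nra.
- have Ej' : j <> (g.*2).+1 by apply/eqP.
  have [d1 d2] := notlast_bnd jN Ej'.
  exfalso; nra.
Qed.
Lemma G3 j t t' : (j < NN)%N -> 0 < t < 1 -> 0 < t' < 1 ->
  Xr j t = Sx t' -> - Yr t = Sy t' -> False.
Proof.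
move=> jN ht ht' EX EY; have [s0 [s1 sG]] := ss_facts.
have [/andP[y0 y1] _ _] := reg_in jN ht.
move: (ht) (ht') => /andP[t0 t1] /andP[t'0 t'1].
case: (lerP t' (1/2)) => a; last first.
  case: (lerP t' (3/4)) => b.
  - by move: EY; rewrite (proj1 (Sy_mid (ltW a) b)) /hh => EY; nra.
  - by move: EY; rewrite (proj1 (Sy_hi (ltW b))) /hh => EY; nra.
move: EX EY; rewrite (proj1 (Sy_lo a)) (proj2 (Sy_lo a)).
have [c1 w1] := xc_le_xw_last jN.
rewrite /Xr /Yr /qq /hh /Y0.
set v := 2 * t'.
have v0 : 0 < v by rewrite /v; lra.
have v1 : v <= 1 by rewrite /v; lra.
case: (lerP t (1/2)) => c.
- rewrite (proj1 (m_lo c)) (proj2 (m_lo c)) => EX EY.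
  set u := 2 * t in EX EY.
  have u0 : 0 < u by rewrite /u; lra.
  have Ev : 3/4 * v = (3/4 - ss/2) * u by lra.
  have E2 : u * (xc j * (3/4)) = u * ((1 - ss/4) * (3/4 - ss/2)).
    have -> : u * (xc j * (3/4)) = (xc j * u + (xw j - xc j) * 0) * (3/4) by ring.
    rewrite EX.
    have -> : u * ((1 - ss/4) * (3/4 - ss/2)) = (1 - ss/4) * ((3/4 - ss/2) * u) by ring.
    rewrite -Ev; ring.
  have u0' : u != 0 by rewrite gt_eqF.
  have E3 : xc j * (3/4) = (1 - ss/4) * (3/4 - ss/2).
    by apply: (mulfI u0'); exact: E2.
  have [Ej|Ej] := eqVneq j (g.*2).+1.
  + subst j; move: E3; rewrite (proj2 xw_last) => E3; nra.
  + have Ej' : j <> (g.*2).+1 by apply/eqP.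
    have [d1 d2] := notlast_bnd jN Ej'; nra.
- rewrite (proj1 (m_hi (ltW c))) (proj2 (m_hi (ltW c))) => EX EY.
  set w := 2 * t - 1 in EX EY.
  have w0 : 0 < w by rewrite /w; lra.
  have w1' : w < 1 by rewrite /w; lra.
  have [Ej|Ej] := eqVneq j (g.*2).+1.
  + subst j; move: EX; rewrite (proj1 xw_last) (proj2 xw_last) => EX; nra.
  + have Ej' : j <> (g.*2).+1 by apply/eqP.
    have [d1 d2] := notlast_bnd jN Ej'.
    have X1 : xc j * 1 + (xw j - xc j) * w <= 1 - 3 * ss / 2 by nra.
    nra.
Qed.
Lemma sg_sq (i : 'I_4) (y : R) : (sg i * y)^+2 = y^+2.
Proof. by rewrite /sg; case: (odd i); rewrite ?mulN1r ?mul1r ?sqrrN. Qed.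
Lemma tau_sq (i : 'I_4) (y : R) : (tau i * y)^+2 = y^+2.
Proof. by rewrite /tau; case: (i < 2)%N; rewrite ?mulN1r ?mul1r ?sqrrN. Qed.

Lemma hf_a (i : 'I_4) : 0 < hf (0, sg i * Y0).
Proof.
have [s0 [s1 sG]] := ss_facts.
apply: hf_gt0; rewrite sg_sq /Y0; first lra.
move=> k kg; have := sqr_ge0 (0 - ck k); nra.
Qed.

Lemma hf_star : hf (0, 1) = 0.
Proof.
have [s0 [s1 sG]] := ss_facts.
apply: hf_eq0; first lra.
- move=> k kg; have := sqr_ge0 (0 - ck k); nra.
- by left; lra.
Qed.

Lemma hf_w j : (j < NN)%N -> hf (xw j, 0) = 0.
Proof.
move=> jN; have [s0 [s1 sG]] := ss_facts.
case: (jcases jN) => [->|->|[j0 jg]].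
- rewrite (proj1 xw_0); apply: hf_eq0; first lra.
  + move=> k kg; have := ck_bnd kg; nra.
  + by left; lra.
- rewrite (proj1 xw_last); apply: hf_eq0; first lra.
  + move=> k kg; have := ck_bnd kg; nra.
  + by left; lra.
- have : -1 + 3 * ss / 4 <= xw j <= 1 - 7 * ss / 4.
    rewrite (proj1 (xw_mid j0 jg)).
    have := mid_bound jg; have := ler_wpM2r (ltW s0) (natR_le j0); rewrite mul1r; lra.
  move=> /andP[x1 x2].
  apply: hf_eq0.
  + nra.
  + by move=> k kg; have [Hk _] := mid_hole k j0 jg; lra.
  + right; exists (j.-1)./2.
    * rewrite ltn_half_double; lia.
    * have [_ Hk] := mid_hole ((j.-1)./2) j0 jg.
      have -> : (0:R)^+2 = 0 by rewrite expr2 mulr0.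
      by rewrite addr0; exact: Hk.
Qed.

Lemma V_in t : 0 < t < 1 ->
  [/\ Y0 < Y0 + t * (1 - Y0) < 1, 0 ^+ 2 + (Y0 + t * (1 - Y0))^+2 < 1 &
  forall k, (k < g)%N -> (ss/4)^+2 < (0 - ck k)^+2 + (Y0 + t * (1 - Y0))^+2].
Proof.
move=> /andP[t0 t1]; have [s0 [s1 sG]] := ss_facts; rewrite /Y0; split.
- apply/andP; split; nra.
- nra.
- move=> k kg; have := sqr_ge0 (0 - ck k); nra.
Qed.
Lemma cD (f1 f2 : R -> R) : continuous f1 -> continuous f2 -> continuous (fun t => f1 t + f2 t).
Proof. by move=> c1 c2 t; exact: (continuousD (c1 t) (c2 t)). Qed.
Lemma cM (f1 f2 : R -> R) : continuous f1 -> continuous f2 -> continuous (fun t => f1 t * f2 t).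
Proof. by move=> c1 c2 t; exact: (continuousM (c1 t) (c2 t)). Qed.
Lemma cN (f1 : R -> R) : continuous f1 -> continuous (fun t => - f1 t).
Proof. by move=> c1 t; exact: (continuousN (c1 t)). Qed.
Lemma cC (c : R) : continuous (fun _ : R => c).
Proof. by move=> t; exact: cvg_cst. Qed.
Lemma cI : continuous (fun t : R => t).
Proof. by move=> t; exact: cvg_id. Qed.
Lemma cMin (f1 f2 : R -> R) : continuous f1 -> continuous f2 -> continuous (fun t => Order.min (f1 t) (f2 t)).
Proof. by move=> c1 c2 t; exact: (@continuous_min R R f1 f2 t (c1 t) (c2 t)). Qed.
Lemma cMax (f1 f2 : R -> R) : continuous f1 -> continuous f2 -> continuous (fun t => Order.max (f1 t) (f2 t)).
Proof. by move=> c1 c2 t; exact: (@continuous_max R R f1 f2 t (c1 t) (c2 t)). Qed.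
Lemma cSqrt (f1 : R -> R) : continuous f1 -> continuous (fun t => Num.sqrt (f1 t)).
Proof. move=> c1 t; apply: (continuous_comp (c1 t)); exact: sqrt_continuous. Qed.
Lemma cX2 (f1 : R -> R) : continuous f1 -> continuous (fun t => (f1 t)^+2).
Proof. by move=> c1; rewrite /GRing.exp /=; apply: cM => //; apply: cM => //; exact: cC. Qed.
Lemma cont_hf (fx fy : R -> R) : continuous fx -> continuous fy ->
  continuous (fun t => hf (fx t, fy t)).
Proof.
move=> cx cy; rewrite /hf /hfun.
have ce : forall c : R * R, continuous (fun t => eucl2 (fx t, fy t) c).
  move=> c; rewrite /eucl2 /=; apply: cSqrt; apply: cD; apply: cX2; apply: cD => //; exact: cC.
elim: (index_enum _) => [|a r IH] /=.
- under eq_fun => t do rewrite big_nil.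
  by apply: cD; [exact: cC | apply: cN; exact: ce].
- under eq_fun => t do rewrite big_cons /=.
  apply: cMin => //; apply: cD; [exact: ce | exact: cC].
Qed.
Ltac ctac := repeat first [exact: cC | exact: cI | apply: cD | apply: cM | apply: cN | apply: cMin | apply: cMax].

Lemma cont_path (i : 'I_4) j :
  continuous (fun t => (path i j t).1) /\ continuous (fun t => (path i j t).2).
Proof.
rewrite /path /Xr /Yr /m1 /m2 /n2 /n3; case: (j < NN)%N; [|case: (odd i)] => /=; split; ctac.
Qed.

Lemma cont_gam (i : 'I_4) j : continuous (gamf i j).
Proof.
have [c1 c2] := cont_path i j.
have h : continuous (fun t => tau i * hf (path i j t)).
  have -> : (fun t => tau i * hf (path i j t)) =
            (fun t => tau i * hf ((path i j t).1, (path i j t).2)).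
    by apply: funext => u; case: (path i j u).
  by apply: cM; [exact: cC | exact: cont_hf].
move=> t; rewrite /gamf.
exact: (cvg_pair (cvg_pair (c1 t) (c2 t)) (h t)).
Qed.
Lemma tau_eq (i i' : 'I_4) : tau i = tau i' -> (i < 2)%N = (i' < 2)%N.
Proof.
rewrite /tau; case: (i < 2)%N; case: (i' < 2)%N => // E; exfalso; move: E; lra.
Qed.
Lemma I4_eq (i i' : 'I_4) : odd i = odd i' -> (i < 2)%N = (i' < 2)%N -> i = i'.
Proof.
move=> H1 H2; apply: val_inj; move: H1 H2.
by case: i => [[|[|[|[|i]]]] Hi] //; case: i' => [[|[|[|[|i']]]] Hi'].
Qed.
Lemma I4_succ (i i' : 'I_4) : ~~ odd i -> odd i' -> (i < 2)%N = (i' < 2)%N -> (i' : nat) = i.+1.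
Proof.
by case: i => [[|[|[|[|i]]]] Hi] //; case: i' => [[|[|[|[|i']]]] Hi'].
Qed.

Definition crossP (i : 'I_4) (j : nat) t (i' : 'I_4) (j' : nat) t' :=
  [/\ ~~ odd i, (i' : nat) = i.+1, j = (g.*2).+1, j' = NN & (t = 3/4 /\ t' = 5/8)].

Lemma path0 (i : 'I_4) j : path i j 0 = (0, sg i * Y0).
Proof.
have h : (0:R) <= 1/2 by lra.
rewrite /path /Xr /Yr /Sx /Sy /sg (proj1 (m_lo h)) (proj2 (m_lo h)) (proj1 (n_lo h)) (proj2 (n_lo h)).
case: (j < NN)%N; last case: (odd i) => /=; congr (_, _); ring.
Qed.

Lemma path1 (i : 'I_4) j : path i j 1 = if (j < NN)%N then (xw j, 0) else (0, 1).
Proof.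
have h : (1:R)/2 <= 1 by lra.
have h' : (3:R)/4 <= 1 by lra.
rewrite /path /Xr /Yr /Sx /Sy /sg (proj1 (m_hi h)) (proj2 (m_hi h)) (proj1 (n_hi h')) (proj2 (n_hi h')).
case: (j < NN)%N; last case: (odd i) => /=; congr (_, _); rewrite /hh /Y0; ring.
Qed.
Arguments V_in [t]. Arguments G2 [j t t']. Arguments G3 [j t t'].
Lemma path_pos (i : 'I_4) j t : 0 < t < 1 -> 0 < hf (path i j t).
Proof.
move=> ht; rewrite /path; case: ifP => jN.
- have [_ H1 H2] := reg_in jN ht.
  apply: hf_gt0; rewrite sg_sq //.
- case: (odd i) => /=.
  + have [_ _ H1 H2] := S_in ht; exact: hf_gt0.
  + have [_ H1 H2] := V_in ht; exact: hf_gt0.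
Qed.

Lemma sgE (i : 'I_4) : sg i = if odd i then -1 else 1.
Proof. by []. Qed.

Lemma reg_spec (i i' : 'I_4) j t t' : (j < NN)%N -> 0 < t < 1 -> 0 < t' < 1 ->
  tau i = tau i' -> path i j t = path i' NN t' -> crossP i j t i' NN t'.
Proof.
move=> jN ht ht' Et; rewrite /path jN ltnn /=.
have [/andP[y0 y1] _ _] := reg_in jN ht.
have [/andP[v0 v1] _ _] := V_in ht'.
rewrite sgE; case Oi': (odd i') => /=; case Oi: (odd i) => /=; move=> [EX EY].
- exfalso; apply: (G3 jN ht ht' EX); rewrite /Sy -EY; ring.
- have [-> -> ->] := G2 jN ht ht' EX (etrans (esym (mul1r _)) EY).
  split => //; first by rewrite Oi.
  by apply: I4_succ; [rewrite Oi | rewrite Oi' | exact: tau_eq].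
- exfalso; move: EY; rewrite /Y0 in y1 v0 *; nra.
- exfalso; move: EY; rewrite /Y0 in y1 v0 *; nra.
Qed.
Arguments tau_eq [i i']. Arguments Sy_inj [t t'].
Arguments reg_spec [i i' j t t'].
Lemma main_planar (i i' : 'I_4) j j' t t' : (j <= NN)%N -> (j' <= NN)%N ->
  0 < t < 1 -> 0 < t' < 1 -> tau i = tau i' -> path i j t = path i' j' t' ->
  [\/ [/\ i = i', j = j' & t = t'], crossP i j t i' j' t' | crossP i' j' t' i j t].
Proof.
move=> jN j'N ht ht' Et E.
have Et2 := tau_eq Et.
case: (ltnP j NN) => jl; case: (ltnP j' NN) => j'l.
- move: E; rewrite /path jl j'l sgE sgE => -[EX EY].
  have [/andP[y0 y1] _ _] := reg_in jl ht.
  have [/andP[y0' y1'] _ _] := reg_in j'l ht'.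
  case Oi: (odd i) EY; case Oi': (odd i') => /= EY; try (exfalso; nra).
  + have Ett : t = t' by apply: Yr_inj; lra.
    subst t'; have Ejj := Xr_inj jl j'l ht EX.
    by constructor 1; split => //; apply: I4_eq => //; rewrite Oi Oi'.
  + have Ett : t = t' by apply: Yr_inj; lra.
    subst t'; have Ejj := Xr_inj jl j'l ht EX.
    by constructor 1; split => //; apply: I4_eq => //; rewrite Oi Oi'.
- have Ej' : j' = NN by apply/eqP; rewrite eqn_leq j'N j'l.
  subst j'; constructor 2; exact: reg_spec jl ht ht' Et E.
- have Ej : j = NN by apply/eqP; rewrite eqn_leq jN jl.
  subst j; constructor 3; exact: reg_spec j'l ht' ht (esym Et) (esym E).
- have Ej : j = NN by apply/eqP; rewrite eqn_leq jN jl.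
  have Ej' : j' = NN by apply/eqP; rewrite eqn_leq j'N j'l.
  subst j j'; move: E; rewrite /path ltnn.
  have [x0 _ _ _] := S_in ht.
  have [x0' _ _ _] := S_in ht'.
  move: (ht) (ht') => /andP[t0 t1] /andP[t0' t1'].
  case: (boolP (odd i)) => Oi; case: (boolP (odd i')) => Oi'; rewrite ?Oi ?Oi' /= => E'.
  + case: E' => EX EY.
    have a1 : 0 <= t <= 1 by apply/andP; split; lra.
    have a2 : 0 <= t' <= 1 by apply/andP; split; lra.
    have Ett : t = t' by apply: (Sy_inj a1 a2 EY).
    by constructor 1; split => //; apply: I4_eq => //; rewrite Oi Oi'.
  + by case: E' => EX EY; exfalso; move: x0; rewrite /Sx EX ltxx.
  + by case: E' => EX EY; exfalso; move: x0'; rewrite /Sx -EX ltxx.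
  + case: E' => EY; have Ett : t = t' by move: EY; rewrite /Y0; nra.
    by constructor 1; split => //; apply: I4_eq => //; rewrite (negbTE Oi) (negbTE Oi').
Qed.
Arguments path_pos i j [t].
Lemma pairE (p : R * R) : (p.1, p.2) = p.
Proof. by case: p. Qed.

Lemma gam_eq_inv (i i' : 'I_4) j j' t t' : 0 < t < 1 ->
  gamf i j t = gamf i' j' t' -> path i j t = path i' j' t' /\ tau i = tau i'.
Proof.
move=> ht; rewrite /gamf => -[E1 E2 E3].
have EP : path i j t = path i' j' t' by rewrite -(pairE (path i j t)) E1 E2 pairE.
split => //; move: E3; rewrite EP => E3.
have h := path_pos i j ht; rewrite EP in h.
by apply: (mulIf (lt0r_neq0 h)).
Qed.

Lemma path_y_inj (i : 'I_4) j s s' : 0 <= s <= 1 -> 0 <= s' <= 1 ->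
  (path i j s).2 = (path i j s').2 -> s = s'.
Proof.
move=> hs hs'; rewrite /path; case: ifP => _ /=.
- rewrite sgE; case: (odd i) => E; apply: Yr_inj; lra.
- case: (odd i) => /= E; first exact: (Sy_inj hs hs').
  move: E; rewrite /Y0 => E; lra.
Qed.

Lemma path_novert (i : 'I_4) j t : 0 < t < 1 ->
  [/\ forall i' : 'I_4, path i j t <> (0, sg i' * Y0), path i j t <> (0, 1) &
      forall j', (j' < NN)%N -> path i j t <> (xw j', 0)].
Proof.
move=> ht; have [s0 [s1 sG]] := ss_facts.
rewrite /path; case: ifP => jN.
- have [/andP[y0 y1] _ _] := reg_in jN ht.
  split.
  + move=> i' [_]; rewrite !sgE; case: (odd i); case: (odd i') => E; move: E y1; rewrite /Y0; lra.
  + move=> [_]; rewrite !sgE; case: (odd i) => E; move: E y1; rewrite /Y0; lra.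
  + move=> j' _ [_]; rewrite !sgE; case: (odd i) => E; move: E y0; lra.
- have [/andP[v0 v1] _ _] := V_in ht.
  have [x0 /andP[z0 z1] _ _] := S_in ht.
  case: (odd i) => /=; split.
  + by move=> i' [E _]; move: x0; rewrite /Sx E ltxx.
  + by move=> [E _]; move: x0; rewrite /Sx E ltxx.
  + move=> j' j'N [EX EY].
    have Et := Sy_zero ht EY.
    move: EX; rewrite Et.
    have h1 : (1:R)/2 <= 1/2 by lra.
    have h2 : (1:R)/2 <= 3/4 by lra.
    rewrite -/(Sx (1/2)) (proj2 (Sy_mid h1 h2)) => EX.
    have [Ej|Ej] := eqVneq j' (g.*2).+1.
    * by subst j'; move: EX; rewrite (proj1 xw_last) /qq; lra.
    * have Ej' : j' <> (g.*2).+1 by apply/eqP.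
      have [_ d2] := notlast_bnd j'N Ej'; move: EX; rewrite /qq; lra.
  + move=> i' []; rewrite sgE; case: (odd i') => E; move: E v0; rewrite /Y0; lra.
  + by move=> [E]; move: v1; rewrite E; lra.
  + move=> j' _ [_ E]; move: v0; rewrite E /Y0; lra.
Qed.
Arguments path_novert i j [t]. Arguments gam_eq_inv [i i' j j' t t'].
Arguments main_planar [i i' j j' t t'].

Lemma vpa_in (i : 'I_4) : @surface R g (vpa i).
Proof. by split; [exact: ltW (hf_a i) | rewrite /= tau_sq]. Qed.

Lemma vpb_in j : @surface R g (vpb j).
Proof.
rewrite /vpb; case: ifP => jN; split => /=.
- by rewrite -/(hf _) hf_w.
- by rewrite -/(hf _) hf_w.
- by rewrite -/(hf _) hf_star.
- by rewrite -/(hf _) hf_star.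
Qed.

Lemma gamf_in (i : 'I_4) j t : (j <= NN)%N -> 0 <= t <= 1 -> @surface R g (gamf i j t).
Proof.
move=> jN /andP[t0 t1]; split => /=; last by rewrite pairE tau_sq.
rewrite pairE -/(hf _).
have [->|t0'] := eqVneq t 0; first by rewrite path0; exact: ltW (hf_a i).
have [->|t1'] := eqVneq t 1.
  by rewrite path1; case: ifP => H; [rewrite hf_w | rewrite hf_star].
apply: ltW; apply: path_pos; apply/andP; split.
- by rewrite lt_neqAle eq_sym t0' t0.
- by rewrite lt_neqAle t1' t1.
Qed.

Lemma gamf_start (i : 'I_4) j : gamf i j 0 = vpa i.
Proof. by rewrite /gamf /vpa path0. Qed.

Lemma gamf_end (i : 'I_4) j : gamf i j 1 = vpb j.
Proof.
rewrite /gamf /vpb path1; case: ifP => jN /=.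
- by rewrite hf_w // mulr0.
- by rewrite hf_star mulr0.
Qed.

Lemma gamf_novert_a (i i' : 'I_4) j t : 0 < t < 1 -> gamf i j t <> vpa i'.
Proof.
move=> ht; rewrite /gamf /vpa => -[E1 E2 _].
have [H _ _] := path_novert i j ht; apply: (H i').
by rewrite -(pairE (path i j t)) E1 E2.
Qed.

Lemma gamf_novert_b (i : 'I_4) j j' t : 0 < t < 1 -> gamf i j t <> vpb j'.
Proof.
move=> ht; rewrite /gamf /vpb; case: ifP => jN [E1 E2 _].
- have [_ _ H] := path_novert i j ht; apply: (H j' jN).
  by rewrite -(pairE (path i j t)) E1 E2.
- have [_ H _] := path_novert i j ht; apply: H.
  by rewrite -(pairE (path i j t)) E1 E2.
Qed.
Definition vposD n (v : 'I_4 + 'I_n) : pt3 R :=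
  match v with inl i => vpa i | inr j => vpb j end.
Definition gamD n (e : 'I_4 * 'I_n) : R -> pt3 R := gamf e.1 e.2.

Lemma sg_odd (i i' : 'I_4) : sg i = sg i' -> odd i = odd i'.
Proof. rewrite !sgE; case: (odd i); case: (odd i') => // E; exfalso; move: E; lra. Qed.

Lemma vpa_inj (i i' : 'I_4) : vpa i = vpa i' -> i = i'.
Proof.
rewrite /vpa => -[E1 E2].
have Y0n : Y0 != 0 by rewrite /Y0; apply/eqP; lra.
have Es : sg i = sg i' by apply: (mulIf Y0n).
rewrite Es in E2; have Et : tau i = tau i' by apply: (mulIf (lt0r_neq0 (hf_a i'))).
by apply: I4_eq; [exact: sg_odd | exact: tau_eq].
Qed.

Lemma vpb_inj n (j j' : 'I_n) : (n <= NN.+1)%N -> vpb j = vpb j' -> j = j'.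
Proof.
move=> hn; rewrite /vpb => E; apply: val_inj => /=; move: E.
case: ifP => jN; case: ifP => j'N.
- move=> [E]; case: (ltngtP j j') => // H.
  + by move: (proj1 (xw_mono H j'N)); rewrite E ltxx.
  + by move: (proj1 (xw_mono H jN)); rewrite E ltxx.
- move=> [_ E]; exfalso; move: E; lra.
- move=> [_ E]; exfalso; move: E; lra.
- move=> _; have := ltn_ord j; have := ltn_ord j'; move: jN j'N hn; lia.
Qed.

Lemma vposD_inj n : (n <= NN.+1)%N -> injective (vposD n).
Proof.
move=> hn [i|j] [i'|j'] /=.
- by move=> /vpa_inj ->.
- move=> E; exfalso; move: (congr1 (fun p : pt3 R => p.1.2) E).
  rewrite /vpa /vpb /=; case: ifP => _ /=; rewrite sgE /Y0; case: (odd i) => /=; lra.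
- move=> E; exfalso; move: (congr1 (fun p : pt3 R => p.1.2) E).
  rewrite /vpa /vpb /=; case: ifP => _ /=; rewrite sgE /Y0; case: (odd i') => /=; lra.
- by move=> /(vpb_inj _ _ _ hn) ->.
Qed.
Arguments gamD {n}. Arguments vposD {n}.
Arguments gamf_novert_a i i' j [t]. Arguments gamf_novert_b i j j' [t].

Lemma locD_edge n (e : 'I_4 * 'I_n) t : 0 < t < 1 -> exists2 d : R, 0 < d &
      forall s s', 0 <= s <= 1 -> 0 <= s' <= 1 ->
        `|s - t| < d -> `|s' - t| < d -> gamD e s = gamD e s' -> s = s'.
Proof.
move=> _; exists 1 => // s s' hs hs' _ _ E.
apply: (@path_y_inj e.1 e.2 s s' hs hs'); exact: (congr1 (fun p : pt3 R => p.1.2) E).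
Qed.

Lemma crossP_t (i i' : 'I_4) j j' t t' : crossP i j t i' j' t' -> t = 3/4 /\ t' = 5/8.
Proof. by case. Qed.

Lemma locD_left n (i : 'I_4) : (n <= NN.+1)%N -> exists2 d : R, 0 < d &
      forall (j j' : 'I_n) s s', 0 <= s < d -> 0 <= s' < d ->
        gamD (i, j) s = gamD (i, j') s' ->
        (j = j' /\ s = s') \/ (s = 0 /\ s' = 0).
Proof.
move=> hn; exists (1/2); first lra.
move=> j j' s s' /andP[s0 s1] /andP[s0' s1']; rewrite /gamD /= => E.
have jN : (j <= NN)%N by rewrite -ltnS; apply: leq_trans (ltn_ord j) hn.
have j'N : (j' <= NN)%N by rewrite -ltnS; apply: leq_trans (ltn_ord j') hn.
have [Es|Es] := eqVneq s 0; have [Es'|Es'] := eqVneq s' 0.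
- by right.
- exfalso; subst s; rewrite gamf_start in E.
  apply: (gamf_novert_a i i j' (t := s')); last by rewrite E.
  by apply/andP; split; [rewrite lt_neqAle eq_sym Es' s0' | lra].
- exfalso; subst s'; rewrite gamf_start in E.
  apply: (gamf_novert_a i i j (t := s)); last by rewrite E.
  by apply/andP; split; [rewrite lt_neqAle eq_sym Es s0 | lra].
- have hs : 0 < s < 1 by apply/andP; split; [rewrite lt_neqAle eq_sym Es s0 | lra].
  have hs' : 0 < s' < 1 by apply/andP; split; [rewrite lt_neqAle eq_sym Es' s0' | lra].
  have [EP Et] := gam_eq_inv hs E.
  case: (main_planar jN j'N hs hs' Et EP) => [[_ Ej ->]|/crossP_t[H _]|/crossP_t[H _]].
  + by left; split => //; apply: val_inj.
  + by exfalso; move: s1; rewrite H; lra.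
  + by exfalso; move: s1'; rewrite H; lra.
Qed.

Lemma locD_right n (j : 'I_n) : (n <= NN.+1)%N -> exists2 d : R, 0 < d &
      forall (i i' : 'I_4) s s', 1 - d < s <= 1 -> 1 - d < s' <= 1 ->
        gamD (i, j) s = gamD (i', j) s' ->
        (i = i' /\ s = s') \/ (s = 1 /\ s' = 1).
Proof.
move=> hn; exists (1/8); first lra.
move=> i i' s s' /andP[s0 s1] /andP[s0' s1']; rewrite /gamD /= => E.
have jN : (j <= NN)%N by rewrite -ltnS; apply: leq_trans (ltn_ord j) hn.
have [Es|Es] := eqVneq s 1; have [Es'|Es'] := eqVneq s' 1.
- by right.
- exfalso; subst s; rewrite gamf_end in E.
  apply: (gamf_novert_b i' j j (t := s')); last by rewrite E.
  by apply/andP; split; [lra | rewrite lt_neqAle Es' s1'].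
- exfalso; subst s'; rewrite gamf_end in E.
  apply: (gamf_novert_b i j j (t := s)); last by rewrite E.
  by apply/andP; split; [lra | rewrite lt_neqAle Es s1].
- have hs : 0 < s < 1 by apply/andP; split; [lra | rewrite lt_neqAle Es s1].
  have hs' : 0 < s' < 1 by apply/andP; split; [lra | rewrite lt_neqAle Es' s1'].
  have [EP Et] := gam_eq_inv hs E.
  case: (main_planar jN jN hs hs' Et EP) => [[-> _ ->]|/crossP_t[H H']|/crossP_t[H H']].
  + by left.
  + by exfalso; move: s0; rewrite H; lra.
  + by exfalso; move: s0'; rewrite H; lra.
Qed.
Lemma D_vpos_in n (v : 'I_4 + 'I_n) : @surface R g (vposD v).
Proof. by case: v => [i|j]; [exact: vpa_in | exact: vpb_in]. Qed.
Lemma D_gam_in n (hn : (n <= NN.+1)%N) (e : 'I_4 * 'I_n) t : 0 <= t <= 1 -> @surface R g (gamD e t).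
Proof.
apply: gamf_in; rewrite -ltnS; apply: leq_trans (ltn_ord e.2) hn.
Qed.
Lemma D_gam_cont n (e : 'I_4 * 'I_n) : {within `[0, 1], continuous (gamD e)}.
Proof. apply: continuous_subspaceT; exact: cont_gam. Qed.
Lemma D_gam_start n (e : 'I_4 * 'I_n) : gamD e 0 = @vposD n (inl e.1).
Proof. exact: gamf_start. Qed.
Lemma D_gam_end n (e : 'I_4 * 'I_n) : gamD e 1 = @vposD n (inr e.2).
Proof. exact: gamf_end. Qed.
Lemma D_novert n (v : 'I_4 + 'I_n) (e : 'I_4 * 'I_n) t : 0 < t < 1 -> gamD e t <> vposD v.
Proof.
move=> ht; case: v => [i|j] /=; [exact: gamf_novert_a | exact: gamf_novert_b].
Qed.

Definition DD n (hn : (n <= NN.+1)%N) : drawing R 4 n g :=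
  @Drawing R 4 n g (@vposD n) (@gamD n) (@D_vpos_in n) (@vposD_inj n hn) (@D_gam_in n hn)
    (@D_gam_cont n) (@D_gam_start n) (@D_gam_end n) (@D_novert n) (@locD_edge n)
    (fun i => @locD_left n i hn) (fun j => @locD_right n j hn).
Arguments DD {n}.
Lemma cross_none n (hn : (n <= NN)%N) (hn' : (n <= NN.+1)%N) :
  crossings (DD hn') = set0.
Proof.
apply/seteqP; split => // S [p [q [pq hp hq E _]]].
move: p q pq hp hq E => [[i j] t] [[i' j'] t'] /= pq hp hq E.
have jN : (j <= NN)%N by apply: leq_trans (ltnW (ltn_ord j)) hn.
have j'N : (j' <= NN)%N by apply: leq_trans (ltnW (ltn_ord j')) hn.
have [EP Et] := gam_eq_inv hp E.
case: (main_planar jN j'N hp hq Et EP) => [[Ei Ej Ett]|[_ _ _ Ej _]|[_ _ _ Ej _]].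
- apply: pq; move: Ei => /= Ei; subst i' t'; have Ej' : j = j' := val_inj Ej; by subst j'.
- by move: (ltn_ord j'); rewrite Ej => H; move: (leq_trans H hn); rewrite ltnn.
- by move: (ltn_ord j); rewrite Ej => H; move: (leq_trans H hn); rewrite ltnn.
Qed.

Lemma kainen_even (hn' : (NN <= NN.+1)%N) : kainen_drawing (DD hn').
Proof.
exists 0%N; split.
- by rewrite (@cross_none NN (leqnn NN) hn') II0; exact: card_eq00.
- rewrite /kainen_bound /NN -mul2n; lia.
Qed.
Lemma cross_pt (i i' : 'I_4) : ~~ odd i -> (i' : nat) = i.+1 ->
  gamf i (g.*2).+1 (3/4) = gamf i' NN (5/8).
Proof.
move=> Oi Ei'.
have Et : tau i = tau i'.
  move: Oi Ei'; rewrite /tau; case: i => [[|[|[|[|i]]]] Hi] //=; case: i' => [[|[|[|[|i']]]] Hi'] //=.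
have Oi' : odd i' by rewrite Ei' /= Oi.
have EP : path i (g.*2).+1 (3/4) = path i' NN (5/8).
  have h1 : (1:R)/2 <= 3/4 by lra.
  have h2 : (1:R)/2 <= 5/8 by lra.
  have h3 : (5:R)/8 <= 3/4 by lra.
  rewrite /path ltnn /NN ltnSn -/NN Oi' /= sgE (negbTE Oi).
  rewrite /Xr /Yr (proj1 (m_hi h1)) (proj2 (m_hi h1)) (proj1 xw_last) (proj2 xw_last).
  rewrite (proj1 (m_hi h2)) (proj1 (n_mid h2 h3)) (proj2 (n_mid h2 h3)).
  by congr (_, _); rewrite /qq /hh /Y0; field.
by rewrite /gamf EP Et.
Qed.
Lemma ltl : ((g.*2).+1 < NN.+1)%N.
Proof. by rewrite /NN. Qed.
Definition jl : 'I_(NN.+1) := Ordinal ltl.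
Definition js : 'I_(NN.+1) := ord_max.
Definition i0 : 'I_4 := @Ordinal 4 0 isT.
Definition i1 : 'I_4 := @Ordinal 4 1 isT.
Definition i2 : 'I_4 := @Ordinal 4 2 isT.
Definition i3 : 'I_4 := @Ordinal 4 3 isT.
Definition S1 : set (epoint R 4 NN.+1) := [set ((i0, jl), 3/4); ((i1, js), 5/8)].
Definition S2 : set (epoint R 4 NN.+1) := [set ((i2, jl), 3/4); ((i3, js), 5/8)].
Definition fS (k : nat) := if k == 0%N then S1 else S2.

Lemma crossP_S (i i' : 'I_4) (j j' : 'I_(NN.+1)) t t' : crossP i j t i' j' t' ->
  [set ((i, j), t); ((i', j'), t')] = S1 \/ [set ((i, j), t); ((i', j'), t')] = S2.
Proof.
case=> Oi Ei' Ej Ej' [-> ->].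
have -> : j = jl by apply: val_inj.
have -> : j' = js by apply: val_inj.
move: Oi Ei'; case: i => [[|[|[|[|i]]]] Hi] //= _ Ei'.
- left; have -> : i' = i1 by apply: val_inj.
  by have -> : Ordinal Hi = i0 by apply: val_inj.
- right; have -> : i' = i3 by apply: val_inj.
  by have -> : Ordinal Hi = i2 by apply: val_inj.
Qed.

Arguments crossP_S [i i' j j' t t'].
Lemma S_in_cross (hn : (NN.+1 <= NN.+1)%N) (i i' : 'I_4) : ~~ odd i -> (i' : nat) = i.+1 ->
  crossings (DD hn) [set ((i, jl), 3/4); ((i', js), 5/8)].
Proof.
move=> Oi Ei'; exists ((i, jl), 3/4), ((i', js), 5/8); split => //.
- move=> /(congr1 (fun p : epoint R 4 NN.+1 => val p.1.1)) /= E.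
  lia.
- by rewrite /=; apply/andP; split; lra.
- by rewrite /=; apply/andP; split; lra.
- exact: cross_pt.
Qed.

Lemma cross_odd (hn : (NN.+1 <= NN.+1)%N) : crossings (DD hn) = fS @` `I_2.
Proof.
apply/seteqP; split.
- move=> S [p [q [pq hp hq E ->]]].
  move: p q pq hp hq E => [[i j] t] [[i' j'] t'] /= pq hp hq E.
  have jN : (j <= NN)%N by rewrite -ltnS.
  have j'N : (j' <= NN)%N by rewrite -ltnS.
  have [EP Et] := gam_eq_inv hp E.
  case: (main_planar jN j'N hp hq Et EP) => [[Ei Ej Ett]|C|C].
  + exfalso; apply: pq; move: Ei => /= Ei; subst i' t'; have Ej' : j = j' := val_inj Ej; by subst j'.
  + case: (crossP_S C) => ->; [exists 0%N | exists 1%N] => //.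
  + rewrite setUC; case: (crossP_S C) => ->; [exists 0%N | exists 1%N] => //.
- move=> S [k hk <-]; rewrite /fS; case: ifP => _.
  + exact: (@S_in_cross hn i0 i1 isT erefl).
  + exact: (@S_in_cross hn i2 i3 isT erefl).
Qed.
Lemma S1_neq_S2 : S1 <> S2.
Proof.
move=> E.
have : S2 ((i0, jl), 3/4) by rewrite -E; left.
by case=> /(congr1 (fun p : epoint R 4 NN.+1 => val p.1.1)).
Qed.

Lemma kainen_odd (hn : (NN.+1 <= NN.+1)%N) : kainen_drawing (DD hn).
Proof.
exists 2%N; split; last by rewrite /kainen_bound /NN -mul2n; lia.
- rewrite cross_odd; apply: inj_card_eq => k k' /= hk hk'.
  move: hk hk'; rewrite !inE /= => hk hk'.
  have [->|->] : k = 0%N \/ k = 1%N by move: hk; lia.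
  all: have [->|->] : k' = 0%N \/ k' = 1%N by move: hk'; lia.
  all: rewrite /fS /= => E //.
  + by exfalso; exact: S1_neq_S2.
  + by exfalso; exact: S1_neq_S2 (esym E).
Qed.
End K.

Theorem mainTheorem14 (R : realType) (n : nat) :
  (2 <= n)%N ->
  exists D : drawing R 4 n ((n - 2) %/ 2),
    kainen_drawing D.
Proof.
move=> n2.
move: (erefl ((n - 2) %/ 2)%N); move: {2}((n - 2) %/ 2)%N => g Hg.
have [En|En] : n = NN g \/ n = (NN g).+1.
  rewrite /NN -mul2n; move: Hg n2; lia.
- subst n; rewrite Hg.
  have hn : (NN g <= (NN g).+1)%N by [].
  exists (@DD R g (NN g) hn); exact: kainen_even.
- subst n; rewrite Hg.
  have hn : ((NN g).+1 <= (NN g).+1)%N by [].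
  exists (@DD R g (NN g).+1 hn); exact: kainen_odd.
Qed.
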